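(* Let $\mathcal A$ be a $\sigma$-structure, $\mathfrak C$ a class of $\sigma$-structures, $\mathcal B$ a $\sigma'$-structure and $c:\mathbb R^+\to\mathbb R^+$ strictly increasing. Suppose $(\phi,(\psi_{\mathcal C})_{\mathcal C\in\mathfrak C})$ is a $c$-reduction from $\mathcal A$ to $\mathcal B$ via $\mathfrak C$, and let $\mathfrak D=\{\phi(\mathcal C):\mathcal C\in\mathfrak C\}$. Then $\mathsf d_{\mathcal B,\mathfrak D}=\Omega\big(\mathsf d_{\mathcal A,\mathfrak C}\circ\lfloor c^{-1}\rfloor\big)$.
   Context: For structures $\mathcal A,\mathcal B$, $\mathsf D(\mathcal A,\mathcal B)$ is the set of all d-representations of $\operatorname{Hom}(\mathcal A,\mathcal B)$ and $\mathsf d(\mathcal A,\mathcal B)=\min_{C\in\mathsf D(\mathcal A,\mathcal B)}\|C\|$. For a class $\mathfrak C$ of structures, $\mathsf d_{\mathcal A,\mathfrak C}:\mathbb N\to\mathbb N$ is $\mathsf d_{\mathcal A,\mathfrak C}(m)=\max\{\mathsf d(\mathcal A,\mathcal C):\mathcal C\in\mathfrak C,\ \|\mathcal C\|\le m\}$, where $\|\mathcal C\|=\sum_{R}|R^{\mathcal C}|$. $\mathfrak C_{\sigma'}$ denotes the class of all $\sigma'$-structures. A $c$-reduction from $\mathcal A$ to $\mathcal B$ via $\mathfrak C$ is a pair $(\phi,(\psi_{\mathcal C})_{\mathcal C\in\mathfrak C})$ with $\phi:\mathfrak C\to\mathfrak C_{\sigma'}$ and $\psi_{\mathcal C}:\mathsf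 D(\mathcal B,\phi(\mathcal C))\to\mathsf D(\mathcal A,\mathcal C)$ such that: (1) for every $n\in\mathbb N$ there is $\mathcal C\in\mathfrak C$ with $\|\phi(\mathcal C)\|\ge n$; (2) $\|\phi(\mathcal C)\|\le c(\|\mathcal C\|)$ for all $\mathcal C\in\mathfrak C$; (3) $\|\psi_{\mathcal C}(C)\|\le\|C\|$ for all $\mathcal C\in\mathfrak C$ and $C\in\mathsf D(\mathcal B,\phi(\mathcal C))$. A factorisation circuit $C$ for finite sets $A,B$ is a finite directed acyclic graph with a unique sink $s$; input gates (no incoming edges) are labelled $\{a\mapsto b\}$, other nodes $\cup$ or $\times$; $\operatorname{dom}(g)$ is $\{a\}$ for an input gate and the union of the children's domains otherwise; $C$ is well-defined if each $\cup$-gate has the same domain as each child and children of each $\times$-gate have pairwise disjoint domains; then $S_g=\{\{a\mapsto b\}\}$ for inputs, the union of the children's sets for $\cup$-gates, and $\{h_1\cup\dots\cup h_r:h_i\in S_{g_i}\}$ for $\times$-gates, $S_C=S_s$. $\|C\|$ is the number of gates plus wires. A d-representation of $\operatorname{Hom}(\mathcal A,\mathcal B)$ is a well-defined factorisation circuit with $S_C=\operatorname{Hom}(\mathcal A,\mathcal B)$. All structures are assumed connected. *)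

(* Defs.v *)
From HB Require Import structures.
From mathcomp Require Import all_boot all_order all_algebra.
From mathcomp Require Import reals.
From mathcomp Require classical_sets.
Set Implicit Arguments. Unset Strict Implicit. Unset Printing Implicit Defensive.
Import Order.TTheory GRing.Theory Num.Theory.

(* ---------- classical sup / inf on nat (0 if it does not exist) ---------- *)
Definition nat_max (P : nat -> Prop) : nat :=
  classical_sets.xget 0%N (fun n => P n /\ forall m, P m -> (m <= n)%N).
Definition nat_min (P : nat -> Prop) : nat :=
  classical_sets.xget 0%N (fun n => P n /\ forall m, P m -> (n <= m)%N).

Record signature := Signature { sym : finType; arity : sym -> nat }.

Record structure (sg : signature) := Structure {
  univ : finType;
  interp : forall R : sym sg, {set (arity R).-tuple univ} }.

Definition ssize (sg : signature) (C : structure sg) : nat :=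
  (\sum_(R : sym sg) #|interp C R|)%N.

Definition gadj (sg : signature) (C : structure sg) : rel (univ C) :=
  fun x y => [exists R : sym sg, exists t in interp C R, (x \in (t : seq _)) && (y \in (t : seq _))].
Definition connected_structure (sg : signature) (C : structure sg) : Prop :=
  forall x y : univ C, connect (@gadj sg C) x y.

(* homomorphisms, given by their graphs as sets of pairs a |-> b *)
Definition is_hom (sg : signature) (A B : structure sg)
    (h : {ffun univ A -> univ B}) : bool :=
  [forall R : sym sg, forall t in interp A R, map_tuple h t \in interp B R].
Definition fgraph_set (A B : finType) (h : {ffun A -> B}) : {set A * B} :=
  [set (x, h x) | x : A].
Definition Hom (sg : signature) (A B : structure sg) : {set {set univ A * univ B}} :=
  [set fgraph_set h | h in [pred h : {ffun univ A -> univ B} | is_hom h]].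

(* Acyclicity is encoded by a topological numbering: children of i
   have smaller index (every finite DAG admits such a numbering). *)
Inductive gkind (A B : finType) := GIn of A & B | GUnion | GProd.
Arguments GUnion {A B}.
Arguments GProd {A B}.

Record circuit (A B : finType) := Circuit {
  cgates : nat;
  gate : 'I_cgates -> gkind A B;
  children : 'I_cgates -> seq 'I_cgates }.
Arguments cgates {A B} c : rename.
Arguments gate {A B} c _ : rename.
Arguments children {A B} c _ : rename.

Definition csize (A B : finType) (C : circuit A B) : nat :=
  (cgates C + \sum_(i : 'I_(cgates C)) size (children C i))%N.

Section Sem.
Variables (A B : finType) (C : circuit A B).
Local Notation n := (cgates C).

Fixpoint cdom_f (k : nat) (i : 'I_n) : {set A} :=
  match k with
  | 0 => set0
  | k.+1 => match gate C i with
            | GIn a _ => [set a]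
            | _ => \bigcup_(j <- children C i) cdom_f k j
            end
  end.

Fixpoint csem_f (k : nat) (i : 'I_n) : {set {set A * B}} :=
  match k with
  | 0 => set0
  | k.+1 => match gate C i with
            | GIn a b => [set [set (a, b)]]
            | GUnion => \bigcup_(j <- children C i) csem_f k j
            | GProd => foldr (fun j (acc : {set {set A * B}}) => [set h :|: g | h in csem_f k j, g in acc])
                             [set set0] (children C i)
            end
  end.

(* dom(g) and S_g (correct for well-formed circuits: recursion depth <= n) *)
Definition cdom (i : 'I_n) := cdom_f n i.
Definition csem (i : 'I_n) := csem_f n i.

Definition circuit_wf : Prop :=
  forall i : 'I_n, uniq (children C i) /\ (forall j, j \in children C i -> (j < i)%N) /\
     (forall a b, gate C i = GIn a b -> children C i = [::]).

Definition is_sink (s : 'I_n) : Prop := forall i : 'I_n, s \notin children C i.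

Definition well_defined : Prop :=
  forall i : 'I_n,
    (gate C i = GUnion -> forall j, j \in children C i -> cdom j = cdom i) /\
    (gate C i = GProd -> forall j1 j2, j1 \in children C i -> j2 \in children C i ->
        j1 != j2 -> [disjoint cdom j1 & cdom j2]).

Definition represents (S : {set {set A * B}}) : Prop :=
  circuit_wf /\ well_defined /\
  exists s, is_sink s /\ (forall s', is_sink s' -> s' = s) /\ csem s = S.
End Sem.

Definition is_drep (sg : signature) (A B : structure sg) (C : circuit (univ A) (univ B)) :=
  represents C (Hom A B).
Arguments is_drep {sg} A B C.

Definition dmin (sg : signature) (A B : structure sg) : nat :=
  nat_min (fun k => exists C, is_drep A B C /\ csize C = k).

Definition dfun (sg : signature) (A : structure sg) (K : structure sg -> Prop) (m : nat) : nat :=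
  nat_max (fun k => exists C, K C /\ (ssize C <= m)%N /\ dmin A C = k).

Definition c_reduction (R : realType) (c : R -> R) (sg sg' : signature)
    (A : structure sg) (B : structure sg') (K : structure sg -> Prop)
    (phi : structure sg -> structure sg')
    (psi : forall C : structure sg, circuit (univ B) (univ (phi C)) -> circuit (univ A) (univ C))
  : Prop :=
  (forall n : nat, exists C, K C /\ (n <= ssize (phi C))%N) /\
  (forall C, K C -> ((ssize (phi C))%:R <= c (ssize C)%:R)%R) /\
  (forall C, K C -> forall D, is_drep B (phi C) D ->
      is_drep A C (psi C D) /\ (csize (psi C D) <= csize D)%N).

(* floor(c^{-1}(n)) = the largest natural m with c(m) <= n *)
Definition floor_cinv (R : realType) (c : R -> R) (n : nat) : nat :=
  nat_max (fun m => (c m%:R <= n%:R)%R).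

Definition bigOmega (R : realType) (f g : nat -> nat) : Prop :=
  exists k : R, (0 < k)%R /\ exists n0 : nat, forall n, (n0 <= n)%N -> (k * (g n)%:R <= (f n)%:R)%R.
Arguments c_reduction {R} c {sg sg'} A B K phi psi.
Arguments bigOmega R f g.
Arguments dfun {sg} A K m.
Arguments dmin {sg} A B.
Arguments floor_cinv {R} c n.

(* Main.v *)
Require Import Defs.
From HB Require Import structures.
From mathcomp Require Import all_boot all_order all_algebra.
From mathcomp Require Import reals.
From mathcomp Require Import zify.
From Stdlib Require Import Classical_Prop.
Import Order.TTheory GRing.Theory Num.Theory.
Set Implicit Arguments. Unset Strict Implicit. Unset Printing Implicit Defensive.

Lemma cdom_fS (A B : finType) (C : circuit A B) k i :
  @cdom_f A B C k.+1 i = match gate C i with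
            | GIn a _ => [set a]
            | _ => \bigcup_(j <- children C i) @cdom_f A B C k j
            end.
Proof. by []. Qed.

Lemma csem_fS (A B : finType) (C : circuit A B) k i :
  @csem_f A B C k.+1 i = match gate C i with
            | GIn a b => [set [set (a, b)]]
            | GUnion => \bigcup_(j <- children C i) @csem_f A B C k j
            | GProd => foldr (fun j (acc : {set {set A * B}}) => [set h :|: g | h in @csem_f A B C k j, g in acc])
                             [set set0] (children C i)
            end.
Proof. by []. Qed.

Lemma onth_some (T : Type) (x0 : T) s n : n < size s -> onth s n = Some (nth x0 s n).
Proof. by move=> H; rewrite onthE (nth_map x0). Qed.

Lemma lt_pq i j p q : i < p -> j < q -> i*q + j < p*q.
Proof.
move=> ip jq; have H : i.+1 * q <= p * q by rewrite leq_mul2r ip orbT.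
rewrite mulSn in H; lia.
Qed.

Lemma lt_pqN i j p q : i < p -> j < q -> i*q + j < (p*q+p).+1.
Proof. move=> ip jq; have := lt_pq ip jq; lia. Qed.

Lemma lt_xi x i p : i < p -> x + i < (x+p).+1.
Proof. lia. Qed.
Lemma lt_xi' x i p : i < p -> x + i < x+p.
Proof. lia. Qed.

Lemma bigcup_seqP (I : eqType) (T : finType) (s : seq I) (F : I -> {set T}) x :
  reflect (exists2 j, j \in s & x \in F j) (x \in \bigcup_(j <- s) F j).
Proof.
apply: (iffP idP).
  elim: s => [|j s IH]; first by rewrite big_nil inE.
  rewrite big_cons inE => /orP[h|/IH[k ks h]]; first by exists j; rewrite ?inE ?eqxx.
  by exists k; rewrite // inE ks orbT.
case=> j; elim: s => [|k s IH] //; rewrite inE big_cons inE => /orP[/eqP<- ->//|js h].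
by rewrite IH ?orbT.
Qed.

Definition qq (A : finType) := #|A|.

Section Generic.
Variables (A B : finType) (fs : seq {ffun A -> B}).
Local Notation p := (size fs).
Local Notation q := (qq A).
Local Notation ea := (enum A).

Definition gN := (p*q+p).+1.
Definition ggate (k : 'I_gN) : gkind A B :=
  if val k < p*q then
    match onth fs (val k %/ q), onth ea (val k %% q) with
    | Some f, Some a => GIn a (f a) | _, _ => GUnion end
  else if val k < p*q+p then GProd else GUnion.
Definition gchildren (k : 'I_gN) : seq 'I_gN :=
  if val k < p*q then [::]
  else if val k < p*q+p then [seq inord ((val k - p*q)*q + index a ea) : 'I_gN | a <- ea]
  else [seq inord (p*q + i) : 'I_gN | i <- iota 0 p].
Definition gcirc := Circuit ggate gchildren.

Definition inp i a : 'I_gN := inord (i*q + index a ea).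
Definition prd i : 'I_gN := inord (p*q + i).
Definition groot : 'I_gN := ord_max.

Lemma idx_lt a : index a ea < q.
Proof. by rewrite /qq cardE index_mem mem_enum. Qed.

Lemma inp_val i a : i < p -> val (inp i a) = i*q + index a ea.
Proof.
move=> ip; rewrite /inp /= inordK //; exact: lt_pqN ip (idx_lt a).
Qed.

Lemma prd_val i : i < p -> val (prd i) = p*q + i.
Proof. move=> ip; rewrite /prd /= inordK //; exact: lt_xi. Qed.

Lemma gate_inp i a f : onth fs i = Some f -> gate gcirc (inp i a) = GIn a (f a).
Proof.
move=> Hf; have ip : i < p by rewrite -onthTE Hf.
have qp := idx_lt a.
rewrite /= /ggate inp_val // ifT; last exact: lt_pq.
rewrite divnMDl; last by lia.
rewrite divn_small // addn0 modnMDl modn_small // Hf.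
by rewrite (onth_some a) ?nth_index ?mem_enum // -cardE.
Qed.

Lemma children_inp i a : i < p -> children gcirc (inp i a) = [::].
Proof.
move=> ip; have qp := idx_lt a.
by rewrite /= /gchildren inp_val // ifT //; apply: lt_pq.
Qed.

Lemma gate_prd i : i < p -> gate gcirc (prd i) = GProd.
Proof. by move=> ip; rewrite /= /ggate prd_val // ifF ?ifT //; lia. Qed.

Lemma children_prd i : i < p -> children gcirc (prd i) = [seq inp i a | a <- ea].
Proof.
by move=> ip; rewrite /= /gchildren prd_val // ifF ?ifT //; [ congr map; rewrite addKn | lia | lia].
Qed.

Lemma gate_root : gate gcirc groot = GUnion.
Proof. by rewrite /= /ggate /= ifF ?ifF //; lia. Qed.

Lemma children_root : children gcirc groot = [seq prd i | i <- iota 0 p].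
Proof. by rewrite /= /gchildren /= ifF ?ifF //; lia. Qed.


Lemma sem_inp t i a f : onth fs i = Some f ->
  cdom_f (C:=gcirc) t.+1 (inp i a) = [set a] /\ csem_f (C:=gcirc) t.+1 (inp i a) = [set [set (a, f a)]].
Proof. by move=> Hf; rewrite cdom_fS csem_fS (gate_inp _ Hf). Qed.

Lemma sem_prd t i f : onth fs i = Some f -> (0 < q -> 0 < t) ->
  cdom_f (C:=gcirc) t.+1 (prd i) = setT /\ csem_f (C:=gcirc) t.+1 (prd i) = [set fgraph_set f].
Proof.
move=> Hf Ht; have ip : i < p by rewrite -onthTE Hf.
have Hs a : cdom_f (C:=gcirc) t (inp i a) = [set a] /\ csem_f (C:=gcirc) t (inp i a) = [set [set (a, f a)]].
  have q0 : 0 < q by rewrite /qq; apply/card_gt0P; exists a.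
  by case: t Ht => [/(_ q0)//|t _]; apply: sem_inp.
rewrite cdom_fS csem_fS gate_prd // children_prd //; split.
  apply/setP => x; rewrite in_setT big_map bigcup_seq; apply/bigcupP; exists x; first by rewrite mem_enum.
  by rewrite (Hs x).1 inE.
have H : forall l, foldr (fun j (acc : {set {set A * B}}) =>
     [set h :|: g | h in csem_f (C:=gcirc) t j, g in acc]) [set set0] [seq inp i a | a <- l]
   = [set \bigcup_(a <- l) [set (a, f a)]].
  elim => [|a l IH] /=; first by rewrite big_nil.
  by rewrite IH (Hs a).2 big_cons imset2_set1l imset_set1.
rewrite H; congr [set _]; apply/setP => -[x y]; rewrite bigcup_seq.
apply/bigcupP/imsetP => [[a _]|[a _ [-> ->]]].
  by rewrite inE => /eqP[-> ->]; exists a.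
by exists a; rewrite ?mem_enum ?inE.
Qed.


Lemma onth_lt i : i < p -> exists f, onth fs i = Some f.
Proof. by rewrite -onthTE; case: onth => // f _; exists f. Qed.

Lemma gclass (k : 'I_gN) : (val k < p*q /\ children gcirc k = [::]) \/
  (exists2 i, i < p & k = prd i) \/ k = groot.
Proof.
case: (ltnP k (p*q)) => h1; first by left; split => //; rewrite /= /gchildren h1.
case: (ltnP k (p*q+p)) => h2.
  right; left; exists (k - p*q); first by rewrite ltn_subLR // addnC.
  by apply: val_inj; rewrite prd_val ?subnKC // ltn_subLR // addnC.
right; right; apply: val_inj; apply/eqP; rewrite /= eqn_leq h2 andbT -ltnS; exact: ltn_ord k.
Qed.

Lemma inp_class (k : 'I_gN) : val k < p*q -> exists i a, i < p /\ k = inp i a.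
Proof.
move=> h.
have q0 : 0 < q by case: (posnP q) h => // ->; rewrite muln0.
have [a0 _] : exists a0 : A, true by move: q0; rewrite /qq => /card_gt0P[a0 _]; exists a0.
exists (k %/ q), (nth a0 ea (k %% q)); split; first by rewrite ltn_divLR.
have ltq : k %% q < q by rewrite ltn_pmod.
apply: val_inj; rewrite inp_val ?ltn_divLR // index_uniq ?enum_uniq //; last by rewrite -cardE.
by rewrite /= -divn_eq.
Qed.

Lemma cdom_root : 0 < p -> cdom_f (C:=gcirc) gN groot = setT.
Proof.
move=> p0; rewrite /gN cdom_fS gate_root children_root big_map.
apply/setP => x; rewrite in_setT; apply/bigcup_seqP; exists 0; first by rewrite mem_iota.
have [f Hf] := onth_lt p0.
rewrite (_ : p*q+p = (p*q+p).-1.+1); last by lia.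
by rewrite (sem_prd (t:=(p*q+p).-1) Hf _).1 ?inE //; lia.
Qed.

Lemma csem_root : csem_f (C:=gcirc) gN groot = [set fgraph_set f | f in fs].
Proof.
rewrite /gN csem_fS gate_root children_root big_map.
case: (posnP p) => p0.
  rewrite p0 /= big_nil; apply/setP => X; rewrite inE; apply/esym/imsetP => -[f].
  by rewrite (size0nil p0).
have [f0 _] : exists f0 : {ffun A -> B}, true by case: fs p0 => // f0 ? _; exists f0.
rewrite (_ : p*q+p = (p*q+p).-1.+1); last by lia.
rewrite (eq_big_seq (fun i => [set fgraph_set (nth f0 fs i)])); last first.
  move=> i; rewrite mem_iota => /andP[_ ip].
  by rewrite (sem_prd (t:=(p*q+p).-1) (onth_some f0 ip) _).2 //; lia.
apply/setP => X; apply/bigcup_seqP/imsetP => [[i]|[f fin ->]].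
  rewrite mem_iota inE => /andP[_ ip] /eqP ->; exists (nth f0 fs i) => //.
  by rewrite mem_nth.
exists (index f fs); first by rewrite mem_iota /= index_mem.
by rewrite nth_index // inE.
Qed.


Lemma gwf : circuit_wf gcirc.
Proof.
move=> k; case: (gclass k) => [[_ ->]|[[i ip ->]|->]]; first by [].
- rewrite children_prd // gate_prd //; split; last split=> //.
    rewrite map_inj_in_uniq ?enum_uniq // => a b _ _ /(congr1 val).
    rewrite !inp_val // => /addnI h.
    have ha : a \in ea by rewrite mem_enum.
    have hb : b \in ea by rewrite mem_enum.
    by rewrite -(nth_index a ha) h nth_index.
  move=> j /mapP[a _ ->]; rewrite inp_val // prd_val //.
  exact: (leq_trans (lt_pq ip (idx_lt a)) (leq_addr _ _)).
- rewrite children_root gate_root; split; last split=> //.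
    rewrite map_inj_in_uniq ?iota_uniq // => a b; rewrite !mem_iota /= => ha hb.
    by move/(congr1 val); rewrite !prd_val // => /addnI.
  move=> j /mapP[a]; rewrite mem_iota /= => ha ->; rewrite prd_val //.
  exact: lt_xi'.
Qed.

Lemma groot_sink : is_sink (C:=gcirc) groot.
Proof.
move=> i; apply/negP => h; have [_ [/(_ _ h) lt _]] := gwf i.
have := ltn_ord i; move: lt; rewrite /= /gN; lia.
Qed.

Lemma groot_unique s' : is_sink (C:=gcirc) s' -> s' = groot.
Proof.
move=> hs; case: (gclass s') => [[h _]|[[i ip E]|//]].
  have [i [a [ip E]]] := inp_class h; have := hs (prd i).
  by rewrite children_prd // E map_f ?mem_enum.
by have := hs groot; rewrite children_root E map_f // mem_iota.
Qed.

Lemma gwd : well_defined gcirc.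
Proof.
move=> k; case: (gclass k) => [[_ ->]|[[i ip ->]|->]]; first by [].
- rewrite gate_prd //; split=> // _ j1 j2; rewrite children_prd // => /mapP[a1 _ ->] /mapP[a2 _ ->] ne.
  have [f Hf] := onth_lt ip.
  rewrite /cdom /gN !(proj1 (sem_inp _ _ Hf)) disjoints1 in_set1.
  by apply: contraNneq ne => ->.
- rewrite gate_root; split=> // _ j; rewrite children_root => /mapP[i]; rewrite mem_iota => /andP[_ ip] ->.
  have p0 : 0 < p by exact: leq_ltn_trans (leq0n i) ip.
  rewrite /cdom cdom_root //.
  have [f Hf] := onth_lt ip.
  rewrite /gN (proj1 (sem_prd Hf _)) //; lia.
Qed.

Lemma grep : represents gcirc [set fgraph_set f | f in fs].
Proof.
split; first exact: gwf.
split; first exact: gwd.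
exists groot; split; first exact: groot_sink.
split; first exact: groot_unique.
exact: csem_root.
Qed.

Lemma gsize : csize gcirc <= gN * (p + q + 1).
Proof.
rewrite /csize /=.
have H : \sum_(i : 'I_gN) size (gchildren i) <= \sum_(i : 'I_gN) (p + q).
  apply: leq_sum => i _; have := gclass i; rewrite /=.
  case=> [[_ ->]|[[j jp ->]|->]] //.
    by have := children_prd jp; rewrite /= => ->; rewrite size_map /qq cardE leq_addl.
  by have := children_root; rewrite /= => ->; rewrite size_map size_iota leq_addr.
rewrite sum_nat_const card_ord in H.
rewrite mulnDr muln1 addnC leq_add2r; exact: H.
Qed.

End Generic.

Lemma card_bigU (I : Type) (T : finType) (r : seq I) (P : pred I) (F : I -> {set T}) (G : I -> nat) :
  (forall i, P i -> #|F i| <= G i) ->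
  #|\bigcup_(i <- r | P i) F i| <= \sum_(i <- r | P i) G i.
Proof.
move=> H; apply: (big_ind2 (fun (X : {set T}) n => #|X| <= n)) => //.
  by rewrite cards0.
move=> X1 n1 X2 n2 h1 h2; apply: leq_trans (leq_card_setU X1 X2) _.
exact: leq_add.
Qed.

Lemma card_univ_le (sg : signature) (D : structure sg) :
  connected_structure D -> #|univ D| <= (ssize D * \sum_(R : sym sg) arity R).+1.
Proof.
move=> cD; case: (leqP #|univ D| 1) => h1; first by apply: leq_trans h1 _.
apply: ltnW.
have Hall : forall x : univ D, x \in \bigcup_(R : sym sg) \bigcup_(t in interp D R) [set y | y \in (t : seq _)].
  move=> x; have [a [b [_ _ ab]]] := card_gt1P h1.
  pose y := if x == a then b else a.
  have xy : x != y by rewrite /y; case: (eqVneq x a) => [->|xa]...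
  have /connectP[pth hp ly] := cD x y.
  case: pth hp ly => [|z pth] /=; first by move=> _ E; rewrite -E eqxx in xy.
  case/andP => /existsP[R /existsP[t /andP[tin /andP[xt _]]]] _ _.
  apply/bigcupP; exists R => //; apply/bigcupP; exists t => //; by rewrite inE.
have E : #|univ D| = #|\bigcup_(R : sym sg) \bigcup_(t in interp D R) [set y | y \in (t : seq _)]|.
  rewrite -cardsT; suff -> : [set: univ D] = \bigcup_(R : sym sg) \bigcup_(t in interp D R) [set y | y \in (t : seq _)] by [].
  by apply/setP => x; rewrite inE Hall.
rewrite E ltnS.
have := @card_bigU (sym sg) (univ D) (index_enum (sym sg)) xpredT (fun R => \bigcup_(t in interp D R) [set y | y \in (t : seq _)]) (fun R => #|interp D R| * arity R).
move=> H; apply: leq_trans (H _) _.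
  move=> R _.
  have := @card_bigU _ (univ D) (index_enum _) (fun t => t \in interp D R) (fun t : (arity R).-tuple (univ D) => [set y | y \in (t : seq _)]) (fun _ => arity R).
  move=> H2; apply: leq_trans (H2 _) _.
    by move=> t _; rewrite cardsE; apply: leq_trans (card_size _) _; rewrite size_tuple.
  by rewrite sum_nat_const.
rewrite big_distrr /=; apply: leq_sum => R _; rewrite leq_mul2r; apply/orP; right.
by rewrite /ssize (bigD1 R) //= leq_addr.
Qed.

Lemma drep_exists (sg : signature) (A B : structure sg) :
  exists C, is_drep A B C /\ csize C <=
   ((#|univ B| ^ #|univ A|) * #|univ A| + #|univ B| ^ #|univ A|).+1 * (#|univ B| ^ #|univ A| + #|univ A| + 1).
Proof.
set fs := [seq h <- enum {ffun univ A -> univ B} | is_hom h].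
exists (gcirc fs); split.
  rewrite /is_drep (_ : Defs.Hom A B = [set fgraph_set f | f in fs]); first exact: grep.
  apply/setP => X; apply/imsetP/imsetP => -[h hh ->]; exists h => //.
    by rewrite /fs mem_filter mem_enum andbT; move: hh; rewrite inE.
  by move: hh; rewrite /fs mem_filter mem_enum andbT inE.
have hp : size fs <= #|univ B| ^ #|univ A|.
  by rewrite size_filter (leq_trans (count_size _ _)) // -cardE card_ffun.
apply: leq_trans (gsize fs) _; rewrite /gN /qq.
apply: leq_mul; first by rewrite ltnS; apply: leq_add => //; apply: leq_mul.
by rewrite leq_add2r leq_add2r.
Qed.

Lemma nat_maxP (P : nat -> Prop) :
  nat_max P = 0 \/ (P (nat_max P) /\ forall m, P m -> m <= nat_max P).
Proof.
rewrite /nat_max; case: classical_sets.xgetP => [x E [Hx Hm]|_]; last by left.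
by right.
Qed.


Lemma ex_max (P : nat -> Prop) b x : (forall m, P m -> m <= b) -> P x ->
  exists n, P n /\ forall m, P m -> m <= n.
Proof.
elim: b => [|b IH] H Px.
  have := H x Px; rewrite leqn0 => /eqP E; exists 0; split; first by rewrite -E.
  by move=> m /H.
case: (classic (P b.+1)) => [Pb|nPb]; first by exists b.+1; split => // m /H.
apply: (IH _ Px) => m Pm; have := H m Pm; rewrite leq_eqVlt => /orP[/eqP E|//].
by rewrite E in Pm.
Qed.

Lemma nat_max_ge (P : nat -> Prop) b x : (forall m, P m -> m <= b) -> P x -> x <= nat_max P.
Proof.
move=> H Px; have ex := ex_max H Px.
by have [_ Hm] := classical_sets.xgetPex 0 ex; apply: Hm.
Qed.

Lemma ex_min (P : nat -> Prop) x : P x -> exists n, P n /\ forall m, P m -> n <= m.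
Proof.
move=> Px; case: (classic (exists n, P n /\ forall m, P m -> n <= m)) => // hn.
suff: forall k y, y <= k -> ~ P y by move/(_ x x (leqnn x)).
elim => [|k IH] y hy Py; apply: hn; exists y; split => // m Pm;
  rewrite leqNgt; apply/negP => my.
  by move: my; rewrite ltnNge (leq_trans hy (leq0n m)).
by apply: (IH m) => //; rewrite -ltnS; exact: leq_trans my hy.
Qed.

Lemma nat_min_le (P : nat -> Prop) x : P x -> P (nat_min P) /\ nat_min P <= x.
Proof.
move=> Px; have ex := ex_min Px.
by have [H Hm] := classical_sets.xgetPex 0 ex; split => //; apply: Hm.
Qed.

Lemma expn_mono m n e : m <= n -> m ^ e <= n ^ e.
Proof. by move=> h; elim: e => // e IH; rewrite !expnS leq_mul. Qed.
Unset Implicit Arguments. Set Strict Implicit. Set Printing Implicit Defensive.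

Theorem lemma6p2 (R : realType) (sg sg' : signature)
  (A : structure sg) (K : structure sg -> Prop) (B : structure sg')
  (c : R -> R)
  (c_nonneg : forall x : R, (0 <= x)%R -> (0 <= c x)%R)
  (c_incr : forall x y : R, (0 <= x)%R -> (x < y)%R -> (c x < c y)%R)
  (phi : structure sg -> structure sg')
  (psi : forall C : structure sg, circuit (univ B) (univ (phi C)) -> circuit (univ A) (univ C))
  (hred : c_reduction c A B K phi psi)
  (connA : connected_structure A) (connB : connected_structure B)
  (connK : forall C, K C -> connected_structure C)
  (connD : forall C, K C -> connected_structure (phi C)) :
  bigOmega R (dfun B (fun D => exists C, K C /\ D = phi C))
             (fun n => dfun A K (floor_cinv c n)).
Proof.
case: hred => [_ [hsize hpsi]].
have cmono x y : (0 <= x)%R -> (x <= y)%R -> (c x <= c y)%R.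
  move=> x0; rewrite le_eqVlt => /orP[/eqP->//|xy].
  exact/ltW/c_incr.
have [n0 hn0] : exists n0 : nat, (c 0 <= n0%:R)%R.
  by eexists; apply/ltW/archi_boundP/c_nonneg.
exists 1%R; split => //; exists n0 => n hn.
rewrite mul1r ler_nat.
have hm : (c (floor_cinv c n)%:R <= n%:R)%R.
  rewrite /floor_cinv; case: (nat_maxP (fun m => (c m%:R <= n%:R)%R)) => [->|[h _]] //.
  by apply: le_trans hn0 _; rewrite ler_nat.
rewrite /dfun.
case: (nat_maxP (fun k => exists C, K C /\ (ssize C <= floor_cinv c n)%N /\ dmin A C = k))
  => [->//|[[C [KC [sC dC]]] _]].
rewrite -dC.
have sphi : (ssize (phi C) <= n)%N.
  rewrite -(ler_nat R); apply: le_trans (hsize C KC) _; apply: le_trans _ hm.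
  by apply: cmono; rewrite ?ler_nat.
have [D0 [rep0 _]] := drep_exists B (phi C).
have [[D [repD szD]] _] := nat_min_le (P := fun k => exists D, is_drep B (phi C) D /\ csize D = k)
  (ex_intro _ D0 (conj rep0 erefl)).
have [repA sizeA] := hpsi C KC D repD.
have h1 : (dmin A C <= dmin B (phi C))%N.
  have [_ h] := nat_min_le (P := fun k => exists D, is_drep A C D /\ csize D = k)
    (ex_intro _ (psi C D) (conj repA erefl)).
  by apply: leq_trans h _; rewrite /dmin -szD.
apply: leq_trans h1 _.
set X := (n * \sum_(r : sym sg') arity r).+1.
set q := #|univ B|.
apply: (@nat_max_ge _ (((X ^ q) * q + X ^ q).+1 * (X ^ q + q + 1))); last first.
  by exists (phi C); split; [exists C | split].
move=> k [D' [[C' [KC' ->]] [sD' <-]]].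
have hX : (#|univ (phi C')| <= X)%N.
  apply: leq_trans (card_univ_le (connD C' KC')) _.
  by rewrite ltnS leq_mul2r sD' orbT.
have [D1 [rep1 sz1]] := drep_exists B (phi C').
have [_ h] := nat_min_le (P := fun k => exists D, is_drep B (phi C') D /\ csize D = k)
  (ex_intro _ D1 (conj rep1 erefl)).
apply: leq_trans h _; apply: leq_trans sz1 _.
have hXq := expn_mono q hX.
apply: leq_mul; first by rewrite ltnS; apply: leq_add => //; apply: leq_mul.
by rewrite leq_add2r leq_add2r.
Qed.
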